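(* Let $\alpha\in(0,1]$, $0<\delta<\alpha$, and let $\mathcal{L}$ be the jump uncertainty set defined in the context. For each $\varphi\in C_b^3(\mathbb{R}^d)$ and all $x,x'\in\mathbb{R}^d$, $$\sup_{F_\mu\in\mathcal{L}}\int_{\mathbb{R}^d}\big|\delta^\alpha_\lambda\varphi(x')-\delta^\alpha_\lambda\varphi(x)\big|F_\mu(d\lambda)\le C_\alpha|x'-x|^\delta,$$ where $C_\alpha=\mathcal{K}_\alpha\big(4\|D\varphi\|_\infty^\delta\|\varphi\|_\infty^{1-\delta}+2\|D^3\varphi\|_\infty^\delta\|D^2\varphi\|_\infty^{1-\delta}\big)$ if $\alpha=1$ and $C_\alpha=\mathcal{K}_\alpha\big(4\|D\varphi\|_\infty^\delta\|\varphi\|_\infty^{1-\delta}+2\|D^2\varphi\|_\infty^\delta\|D\varphi\|_\infty^{1-\delta}\big)$ if $\alpha\in(0,1)$.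
   Context: For a symmetric finite measure $\mu$ on the unit sphere $S\subset\mathbb{R}^d$, $F_\mu(B)=\int_S\mu(dz)\int_0^\infty\mathbb{1}_B(rz)r^{-1-\alpha}dr$; given $\underline{\Lambda},\overline{\Lambda}>0$, $\mathcal{L}=\{F_\mu:\mu(S)\in(\underline{\Lambda},\overline{\Lambda})\}$. $\delta^\alpha_\lambda\varphi(x)=\varphi(x+\lambda)-\varphi(x)-\langle D\varphi(x),\lambda\mathbb{1}_{\{|\lambda|\le1\}}\rangle$ for $\alpha=1$ and $\varphi(x+\lambda)-\varphi(x)$ for $\alpha\in(0,1)$. $\mathcal{K}_1=\sup_{F_\mu\in\mathcal{L}}\int(|\lambda|^2\wedge1)F_\mu(d\lambda)$, and $\mathcal{K}_\alpha=\sup_{F_\mu\in\mathcal{L}}\int(|\lambda|\wedge1)F_\mu(d\lambda)$ for $\alpha\in(0,1)$ (these are finite). $C_b^3(\mathbb{R}^d)$: functions with uniformly bounded derivatives up to order 3; $\|\cdot\|_\infty$ is the sup norm. *)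

(* Defs.v *)
From HB Require Import structures.
From mathcomp Require Import all_boot all_order all_algebra.
From mathcomp Require Import all_classical all_reals all_analysis.
Set Implicit Arguments. Unset Strict Implicit. Unset Printing Implicit Defensive.
Import Order.TTheory GRing.Theory Num.Theory.
Import numFieldNormedType.Exports.
Local Open Scope classical_set_scope.
Local Open Scope ring_scope.

Section Defs.
Variables (R : realType) (d : nat).

(* points of R^d are row vectors (for differentiation) *)
Definition trow (t : d.-tuple R) : 'rV[R]_d := \row_(i < d) tnth t i.

Definition enorm (v : 'rV[R]_d) : R := Num.sqrt (\sum_(i < d) (v ord0 i) ^+ 2).

(* the unit sphere S, as a subset of the measurable space d.-tuple R
   (product = Borel sigma-algebra of R^d) *)
Definition sphere : set (d.-tuple R) := [set z | enorm (trow z) = 1].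

Definition tscale (r : R) (z : d.-tuple R) : d.-tuple R := map_tuple (fun c => r * c) z.
Definition tneg (z : d.-tuple R) : d.-tuple R := map_tuple (fun c => - c) z.

Definition Fmu (alpha : R) (mu : {measure set (d.-tuple R) -> \bar R})
    (B : set (d.-tuple R)) : \bar R :=
  (\int[mu]_(z in sphere)
     \int[lebesgue_measure]_(r in `]0%R, +oo[)
        ((\1_B (tscale r z) : R) * r `^ (- 1 - alpha))%:E)%E.

Definition in_L (alpha lo hi : R) (mu F : {measure set (d.-tuple R) -> \bar R}) : Prop :=
  [/\ mu (~` sphere) = 0%E,
      (forall A, measurable A -> mu (tneg @^-1` A) = mu A),
      (lo%:E < mu setT)%E, (mu setT < hi%:E)%E &
      (forall B, measurable B -> F B = Fmu alpha mu B)].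

Definition Kalpha (alpha lo hi : R) : \bar R :=
  ereal_sup [set (\int[F]_l (if alpha == 1 then Num.min (enorm (trow l) ^+ 2) 1
                             else Num.min (enorm (trow l)) 1)%:E)%E
            | F in [set F | exists mu, in_L alpha lo hi mu F]].

Fixpoint iterD (phi : 'rV[R]_d -> R) (vs : seq 'rV[R]_d) : 'rV[R]_d -> R :=
  match vs with
  | [::] => phi
  | v :: vs' => 'D_v (iterD phi vs')
  end.

Definition Cb3 (phi : 'rV[R]_d -> R) : Prop :=
  [/\ (forall x, differentiable phi x),
      (forall v x, differentiable ('D_v phi) x),
      (forall v w x, differentiable ('D_w ('D_v phi)) x),
      (forall u v w, continuous ('D_u ('D_w ('D_v phi)))) &
      (forall k, (k <= 3)%N -> exists M : R, forall x (vs : seq 'rV[R]_d),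
          size vs = k -> all (fun v => enorm v <= 1) vs -> `|iterD phi vs x| <= M)].

Definition supD (k : nat) (phi : 'rV[R]_d -> R) : R :=
  sup [set `|iterD phi vs x| | x in [set: 'rV[R]_d] &
       vs in [set vs : seq 'rV[R]_d | size vs = k /\ all (fun v => enorm v <= 1) vs]].

Definition deltaA (alpha : R) (phi : 'rV[R]_d -> R) (lam x : 'rV[R]_d) : R :=
  if alpha == 1 then phi (x + lam) - phi x - (if enorm lam <= 1 then 'D_lam phi x else 0)
  else phi (x + lam) - phi x.

Definition Calpha (alpha delta : R) (phi : 'rV[R]_d -> R) : R :=
  if alpha == 1 then
    4 * (supD 1 phi `^ delta * supD 0 phi `^ (1 - delta))
    + 2 * (supD 3 phi `^ delta * supD 2 phi `^ (1 - delta))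
  else
    4 * (supD 1 phi `^ delta * supD 0 phi `^ (1 - delta))
    + 2 * (supD 2 phi `^ delta * supD 1 phi `^ (1 - delta)).

End Defs.

(* Main.v *)
From Pilot Require Import Defs.
From HB Require Import structures.
From mathcomp Require Import all_boot all_order all_algebra.
From mathcomp Require Import all_classical all_reals all_analysis.
From mathcomp Require Import ring lra measurable_realfun.
Import Order.TTheory GRing.Theory Num.Theory.
Import numFieldNormedType.Exports.
Local Open Scope classical_set_scope.
Local Open Scope ring_scope.

Section Aux.
Variable R : realType.

Lemma mvt01 (g dg : R -> R) (B : R) :
  (forall t : R, is_derive t (1:R) g (dg t)) ->
  (forall t, 0 <= t <= 1 -> `|dg t| <= B) -> `|g 1 - g 0| <= B.
Proof.
move=> hg hb.
have cg : {within `[0, 1], continuous g}.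
  apply: derivable_within_continuous => t _.
  by have [] := hg t.
have [c c01 ->] := MVT (@ltr01 R) (fun t _ => hg t) cg.
rewrite subr0 mulr1; apply: hb.
by move: c01; rewrite in_itv /= => /andP[/ltW -> /ltW ->].
Qed.

Variable d : nat.
Local Notation V := 'rV[R]_d.

Lemma is_derive_line (f : V -> R) (y v : V) (t : R) :
  differentiable f (y + t *: v) ->
  is_derive t (1:R) (fun s : R => f (y + s *: v)) ('D_v f (y + t *: v)).
Proof.
move=> df.
have E : (fun h : R => h^-1 *: (((fun s => f (y + s *: v)) \o shift t) (h *: 1) - f (y + t *: v)))
   = (fun h : R => h^-1 *: ((f \o shift (y + t *: v)) (h *: v) - f (y + t *: v))).
  apply/funext => h /=; congr (_ *: (f _ - _)).
  by rewrite [h%:A]mulr1 scalerDl addrCA addrC.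
apply: DeriveDef.
  by rewrite /derivable E; exact: diff_derivable.
by rewrite /derive E.
Qed.


Lemma enorm_ge0 (v : V) : 0 <= enorm v.
Proof. exact: sqrtr_ge0. Qed.

Lemma enormZ (k : R) (v : V) : enorm (k *: v) = `|k| * enorm v.
Proof.
rewrite /enorm -sqrtr_sqr -sqrtrM ?sqr_ge0 // mulr_sumr; congr Num.sqrt.
by apply: eq_bigr => i _; rewrite mxE exprMn.
Qed.

Lemma enorm_eq0 (v : V) : enorm v = 0 -> v = 0.
Proof.
move=> /eqP; rewrite /enorm sqrtr_eq0 => hle.
have h0 : \sum_(i < d) v ord0 i ^+ 2 = 0.
  by apply/eqP; rewrite eq_le hle sumr_ge0 // => i _; rewrite sqr_ge0.
apply/rowP => i; rewrite mxE.
move/eqP: h0; rewrite psumr_eq0 => [/allP/(_ i)|i' _]; last by rewrite sqr_ge0.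
by rewrite mem_index_enum sqrf_eq0 => /(_ isT) /eqP.
Qed.

Definition nrm (a : V) : V := (enorm a)^-1 *: a.

Lemma nrmK (a : V) : enorm a *: nrm a = a.
Proof.
rewrite /nrm scalerA; have [h|h] := eqVneq (enorm a) 0.
  by rewrite (@enorm_eq0 a h) scaler0.
by rewrite divff // scale1r.
Qed.

Lemma enorm_nrm (a : V) : enorm (nrm a) <= 1.
Proof.
rewrite /nrm enormZ ger0_norm ?invr_ge0 ?enorm_ge0 //.
have [->|h] := eqVneq (enorm a) 0; first by rewrite mulr0.
by rewrite mulVf.
Qed.

Lemma Dlin (g : V -> R) (z a : V) : differentiable g z ->
  'D_a g z = enorm a * 'D_(nrm a) g z.
Proof.
by move=> dg; rewrite !deriveE // -{1}(nrmK a) linearZ.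
Qed.

Lemma DlinF (g : V -> R) (a : V) : (forall z, differentiable g z) ->
  'D_a g = (fun z => enorm a * 'D_(nrm a) g z).
Proof. by move=> dg; apply/funext => z; apply: Dlin. Qed.

Lemma DscaleF (g : V -> R) (k : R) (a : V) : (forall z, differentiable g z) ->
  'D_a (fun z => k * g z) = (fun z => k * 'D_a g z).
Proof.
move=> dg; apply/funext => z.
have := @deriveZ R V R^o g k z a (diff_derivable (v:=a) (dg z)).
by [].
Qed.


Lemma mul3_le (p q r D S : R) : 0 <= p -> 0 <= q -> 0 <= r -> D <= S ->
  r * (q * (p * D)) <= S * p * q * r.
Proof.
move=> hp hq hr h.
have -> : r * (q * (p * D)) = (p * q * r) * D by ring.
have -> : S * p * q * r = (p * q * r) * S by ring.
by rewrite ler_wpM2l // !mulr_ge0.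
Qed.

Lemma is_derive_mulc (c t : R) : is_derive t (1:R) (fun s : R => s * c) c.
Proof.
have h := @is_deriveZ R R R id c t 1 1 (is_derive_id _ _).
have E : (fun s : R => s * c) = c \*: id by apply/funext => s; rewrite /= mulrC.
rewrite E; exact: (is_derive_eq h (mulr1 c)).
Qed.

Lemma lipG (f : V -> R) (K : R) : (forall z, differentiable f z) ->
  (forall a z, `|'D_a f z| <= K * enorm a) ->
  forall y v, `|f (y + v) - f y| <= K * enorm v.
Proof.
move=> df hb y v.
have := @mvt01 (fun t => f (y + t *: v)) (fun t => 'D_v f (y + t *: v)) (K * enorm v)
  (fun t => @is_derive_line f y v t (df _)) (fun t _ => hb _ _).
by rewrite scale1r scale0r addr0.
Qed.

Lemma mixG (f : V -> R) (v : V) (K : R) : (forall z, differentiable f z) ->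
  (forall z, differentiable ('D_v f) z) ->
  (forall a z, `|'D_a ('D_v f) z| <= K * enorm a) ->
  forall y w, `|(f (y + w + v) - f (y + v)) - (f (y + w) - f y)| <= K * enorm w.
Proof.
move=> df dvf hb y w.
have hd : forall t : R, is_derive t (1:R) (fun s => f (y + w + s *: v) - f (y + s *: v))
   ('D_v f (y + w + t *: v) - 'D_v f (y + t *: v)).
  move=> t.
  have h1 := @is_derive_line f (y + w) v t (df _).
  have h2 := @is_derive_line f y v t (df _).
  have := is_deriveB h1 h2.
  by [].
have := @mvt01 _ _ (K * enorm w) hd.
rewrite !scale1r !scale0r !addr0; apply => t _.
have := @lipG ('D_v f) K dvf hb (y + t *: v) w.
by rewrite addrAC.
Qed.


Lemma interp (a b Q e : R) : 0 <= a -> 0 <= b -> 0 <= e <= 1 ->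
  Q <= a -> Q <= b -> Q <= a `^ (1 - e) * b `^ e.
Proof.
move=> a0 b0 /andP[e0 e1] Qa Qb.
have [ea|an0] := eqVneq a 0.
  subst a; apply: (le_trans Qa); apply: mulr_ge0; exact: powR_ge0.
have [eb|bn0] := eqVneq b 0.
  subst b; apply: (le_trans Qb); apply: mulr_ge0; exact: powR_ge0.
have hm : forall c, 0 <= c -> c != 0 -> c = c `^ (1 - e) * c `^ e.
  by move=> c c0 cn0; rewrite -powRD ?cn0 ?implybT // subrK powRr1.
have [ab|ba] := leP a b.
  apply: (le_trans Qa); rewrite {1}(hm a a0 an0) ler_wpM2l ?powR_ge0 //.
  by apply: ge0_ler_powR => //; rewrite nnegrE.
apply: (le_trans Qb); rewrite {1}(hm b b0 bn0) ler_wpM2r ?powR_ge0 //.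
apply: ge0_ler_powR; rewrite ?nnegrE ?subr_ge0 // ltW //. 
Qed.

Lemma interpk (a b Q e k : R) : 0 <= a -> 0 <= b -> 0 <= e <= 1 -> 0 <= k ->
  Q <= k * a -> Q <= k * b -> Q <= k * (a `^ (1 - e) * b `^ e).
Proof.
move=> a0 b0 e01 k0 Qa Qb.
have [ek|kn0] := eqVneq k 0.
  by subst k; move: Qa; rewrite !mul0r.
have kp : 0 < k by rewrite lt_neqAle eq_sym kn0 k0.
rewrite -ler_pdivrMl //; apply: interp => //; rewrite ler_pdivrMl //.
Qed.

Section Bounds.
Variables (phi : V -> R) (hphi : Cb3 phi).

Lemma supD_ub k : (k <= 3)%N -> forall x vs, size vs = k ->
  all (fun v => enorm v <= 1) vs -> `|Pilot.Defs.iterD phi vs x| <= supD k phi.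
Proof.
case: hphi => _ _ _ _ hb hk x vs hs ha.
have [M hM] := hb k hk.
apply: ub_le_sup.
  exists M => _ [y _ [ws [hws1 hws2] <-]]; exact: hM.
by exists x => //; exists vs.
Qed.

Lemma supD_ge0 k : (k <= 3)%N -> 0 <= supD k phi.
Proof.
move=> hk.
have ha : all (fun v : V => enorm v <= 1) (nseq k 0).
  by apply/allP => v /nseqP [-> _]; rewrite /enorm big1 ?sqrtr0 // => i _; rewrite mxE expr0n.
exact: le_trans (@supD_ub k hk 0 _ (size_nseq k 0) ha).
Qed.

Let d0 : forall z, differentiable phi z. Proof. by case: hphi. Qed.
Let d1 : forall v z, differentiable ('D_v phi) z. Proof. by case: hphi. Qed.
Let d2 : forall v w z, differentiable ('D_w ('D_v phi)) z. Proof. by case: hphi. Qed.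

Lemma B0 z : `|phi z| <= supD 0 phi.
Proof. exact: (@supD_ub 0 isT z [::]). Qed.

Lemma B1 a z : `|'D_a phi z| <= supD 1 phi * enorm a.
Proof.
rewrite Dlin // normrM ger0_norm ?enorm_ge0 // mulrC ler_wpM2r ?enorm_ge0 //.
by apply: (@supD_ub 1 isT z [:: nrm a]) => //=; rewrite enorm_nrm.
Qed.

Lemma B2 a b z : `|'D_a ('D_b phi) z| <= supD 2 phi * enorm a * enorm b.
Proof.
have E : 'D_a ('D_b phi) z = enorm b * 'D_a ('D_(nrm b) phi) z.
  rewrite (@DlinF phi b d0).
  exact: (congr1 (fun f => f z) (@DscaleF _ (enorm b) a (d1 _))).
rewrite E Dlin // !normrM (ger0_norm (enorm_ge0 _)) (ger0_norm (enorm_ge0 _)).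
have h : `|'D_(nrm a) ('D_(nrm b) phi) z| <= supD 2 phi.
  by apply: (@supD_ub 2 isT z [:: nrm a; nrm b]) => //=; rewrite !enorm_nrm.
have -> : enorm b * (enorm a * `|'D_(nrm a) ('D_(nrm b) phi) z|) = (enorm a * enorm b) * `|'D_(nrm a) ('D_(nrm b) phi) z| by ring.
have -> : supD 2 phi * enorm a * enorm b = (enorm a * enorm b) * supD 2 phi by ring.
by rewrite ler_wpM2l // mulr_ge0 // enorm_ge0.
Qed.

Lemma B3 a b c z : `|'D_a ('D_b ('D_c phi)) z| <= supD 3 phi * enorm a * enorm b * enorm c.
Proof.
have E1 : 'D_b ('D_c phi) = fun w => enorm c * 'D_b ('D_(nrm c) phi) w.
  rewrite (@DlinF phi c d0).
  exact: (@DscaleF _ (enorm c) b (d1 _)).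
have E2 : 'D_b ('D_(nrm c) phi) = fun w => enorm b * 'D_(nrm b) ('D_(nrm c) phi) w.
  exact: (@DlinF _ b (d1 _)).
have E : 'D_a ('D_b ('D_c phi)) z = enorm c * (enorm b * 'D_a ('D_(nrm b) ('D_(nrm c) phi)) z).
  apply: (etrans (congr1 (fun f => derive f z a) E1)).
  apply: (etrans (congr1 (fun f => f z) (@DscaleF _ (enorm c) a (d2 _ _)))).
  congr (_ * _).
  apply: (etrans (congr1 (fun f => derive f z a) E2)).
  exact: (congr1 (fun f => f z) (@DscaleF _ (enorm b) a (d2 _ _))).
rewrite E Dlin // !normrM (ger0_norm (enorm_ge0 a)) (ger0_norm (enorm_ge0 b)) (ger0_norm (enorm_ge0 c)).
have h : `|'D_(nrm a) ('D_(nrm b) ('D_(nrm c) phi)) z| <= supD 3 phi.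
  by apply: (@supD_ub 3 isT z [:: nrm a; nrm b; nrm c]) => //=; rewrite !enorm_nrm.
exact: mul3_le (enorm_ge0 a) (enorm_ge0 b) (enorm_ge0 c) h.
Qed.

Lemma lipphi y v : `|phi (y + v) - phi y| <= supD 1 phi * enorm v.
Proof. exact: (@lipG phi _ d0 B1). Qed.

Lemma far0 x h l : `|phi (x + h + l) - phi (x + h) - (phi (x + l) - phi x)| <= 4 * supD 0 phi.
Proof.
have h1 := B0 (x + h + l); have h2 := B0 (x + h); have h3 := B0 (x + l); have h4 := B0 x.
apply: (le_trans (ler_normB _ _)).
have -> : 4 * supD 0 phi = (supD 0 phi + supD 0 phi) + (supD 0 phi + supD 0 phi) by ring.
apply: lerD; apply: (le_trans (ler_normB _ _)); exact: lerD.
Qed.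

Lemma far1 x h l : `|phi (x + h + l) - phi (x + h) - (phi (x + l) - phi x)| <= 2 * (supD 1 phi * enorm h).
Proof.
have -> : phi (x + h + l) - phi (x + h) - (phi (x + l) - phi x)
  = (phi (x + l + h) - phi (x + l)) - (phi (x + h) - phi x).
  by rewrite [x + l + h]addrAC; ring.
apply: (le_trans (ler_normB _ _)); rewrite mulr2n mulrDl mul1r.
exact: lerD (lipphi _ _) (lipphi _ _).
Qed.

Lemma near1 x h l : `|phi (x + h + l) - phi (x + h) - (phi (x + l) - phi x)| <= 2 * (supD 1 phi * enorm l).
Proof.
apply: (le_trans (ler_normB _ _)); rewrite mulr2n mulrDl mul1r.
exact: lerD (lipphi _ _) (lipphi _ _).
Qed.

Lemma near2 x h l : `|phi (x + h + l) - phi (x + h) - (phi (x + l) - phi x)| <= supD 2 phi * enorm l * enorm h.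
Proof.
have hb : forall a z, `|'D_a ('D_l phi) z| <= (supD 2 phi * enorm l) * enorm a.
  by move=> a z; apply: (le_trans (B2 a l z)); rewrite le_eqVlt; apply/orP; left; apply/eqP; ring.
have := @mixG phi l _ d0 (d1 l) hb x h.
have -> : phi (x + h + l) - phi (x + l) - (phi (x + h) - phi x)
  = phi (x + h + l) - phi (x + h) - (phi (x + l) - phi x) by ring.
by [].
Qed.


Lemma tscale_le (t : R) (l : V) : 0 <= t <= 1 -> enorm (t *: l) <= enorm l.
Proof.
move=> /andP[t0 t1]; rewrite enormZ ger0_norm //.
by rewrite -[X in _ <= X]mul1r ler_wpM2r ?enorm_ge0.
Qed.

Lemma tay0 y l : `|phi (y + l) - phi y - 'D_l phi y| <= supD 2 phi * enorm l * enorm l.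
Proof.
set c := 'D_l phi y.
have hd : forall t : R, is_derive t (1:R) (fun s => phi (y + s *: l) - s * c)
   ('D_l phi (y + t *: l) - c).
  move=> t.
  have h1 := @is_derive_line phi y l t (d0 _).
  have h2 := is_derive_mulc c t.
  have := is_deriveB h1 h2.
  by [].
have := @mvt01 _ _ (supD 2 phi * enorm l * enorm l) hd.
rewrite !scale1r !scale0r !addr0 mul1r mul0r subr0 addrAC; apply => t ht.
have hb : forall a z, `|'D_a ('D_l phi) z| <= (supD 2 phi * enorm l) * enorm a.
  by move=> a z; apply: (le_trans (B2 a l z)); rewrite le_eqVlt; apply/orP; left; apply/eqP; ring.
have := @lipG ('D_l phi) _ (d1 l) hb y (t *: l).
move/le_trans; apply.
rewrite ler_wpM2l ?tscale_le // mulr_ge0 ?enorm_ge0 ?supD_ge0 //.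
Qed.

Lemma tay1 x h l :
  `|(phi (x + h + l) - phi (x + h) - 'D_l phi (x + h)) - (phi (x + l) - phi x - 'D_l phi x)|
    <= supD 3 phi * enorm l * enorm l * enorm h.
Proof.
set c := 'D_l phi (x + h) - 'D_l phi x.
have hd : forall t : R, is_derive t (1:R)
   (fun s => phi (x + h + s *: l) - phi (x + s *: l) - s * c)
   ('D_l phi (x + h + t *: l) - 'D_l phi (x + t *: l) - c).
  move=> t.
  have h1 := @is_derive_line phi (x + h) l t (d0 _).
  have h2 := @is_derive_line phi x l t (d0 _).
  have h3 := is_derive_mulc c t.
  have := is_deriveB (is_deriveB h1 h2) h3.
  by [].
have := @mvt01 _ _ (supD 3 phi * enorm l * enorm l * enorm h) hd.
rewrite !scale1r !scale0r !addr0 mul1r mul0r subr0.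
have -> : phi (x + h + l) - phi (x + l) - c - (phi (x + h) - phi x) =
  (phi (x + h + l) - phi (x + h) - 'D_l phi (x + h)) - (phi (x + l) - phi x - 'D_l phi x).
  by rewrite /c; ring.
apply => t ht.
have hb : forall a z, `|'D_a ('D_(t *: l) ('D_l phi)) z| <= (supD 3 phi * enorm (t *: l) * enorm l) * enorm a.
  by move=> a z; apply: (le_trans (B3 a (t *: l) l z)); rewrite le_eqVlt; apply/orP; left; apply/eqP; ring.
have := @mixG ('D_l phi) (t *: l) _ (d1 l) (d2 l (t *: l)) hb x h.
rewrite /c; move/le_trans; apply.
rewrite ler_wpM2r ?enorm_ge0 // ler_wpM2r ?enorm_ge0 // ler_wpM2l ?supD_ge0 // tscale_le //.
Qed.


Lemma pointwise alpha delta x h l : 0 < delta < 1 ->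
  `|deltaA alpha phi l (x + h) - deltaA alpha phi l x| <=
   (Calpha alpha delta phi * enorm h `^ delta) *
   (if alpha == 1 then Num.min (enorm l ^+ 2) 1 else Num.min (enorm l) 1).
Proof.
move=> /andP[dl0 dl1].
have de : 0 <= delta <= 1 by rewrite !ltW.
have A0 := @supD_ge0 0 isT; have A1 := @supD_ge0 1 isT.
have A2 := @supD_ge0 2 isT; have A3 := @supD_ge0 3 isT.
have he := enorm_ge0 h; have hn := enorm_ge0 l.
have ht : 0 <= enorm h `^ delta := powR_ge0 _ _.
set t := enorm h `^ delta.
have pX : forall a b : R, 0 <= a `^ b := fun a b => powR_ge0 a b.
have far : `|phi (x + h + l) - phi (x + h) - (phi (x + l) - phi x)| <=
    4 * (supD 0 phi `^ (1 - delta) * (supD 1 phi `^ delta * t)).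
  rewrite -powRM //.
  have h4 : (0:R) <= 4 by [].
  apply: (@interpk _ _ _ _ _ A0 (mulr_ge0 A1 he) de h4 (far0 _ _ _)).
  apply: (le_trans (far1 _ _ _)).
  by rewrite ler_wpM2r ?mulr_ge0 // ler_nat.
have X0 : 0 <= supD 1 phi `^ delta * supD 0 phi `^ (1 - delta) by rewrite mulr_ge0.
rewrite /deltaA /Calpha; case: (alpha == 1).
  have [n1|n1] := leP (enorm l) 1.
    rewrite min_l; last by rewrite expr_le1.
    have near : `|phi (x + h + l) - phi (x + h) - 'D_l phi (x + h) - (phi (x + l) - phi x - 'D_l phi x)|
       <= (2 * enorm l ^+ 2) * (supD 2 phi `^ (1 - delta) * (supD 3 phi `^ delta * t)).
      rewrite -powRM //.
      have k0 : 0 <= 2 * enorm l ^+ 2 by rewrite mulr_ge0 ?sqr_ge0.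
      apply: (@interpk _ _ _ _ _ A2 (mulr_ge0 A3 he) de k0).
      + apply: (le_trans (ler_normB _ _)).
        have -> : 2 * enorm l ^+ 2 * supD 2 phi = supD 2 phi * enorm l * enorm l + supD 2 phi * enorm l * enorm l by ring.
        exact: lerD (tay0 _ _) (tay0 _ _).
      + apply: (le_trans (tay1 _ _ _)).
        have -> : supD 3 phi * enorm l * enorm l * enorm h = 1 * (enorm l ^+ 2 * (supD 3 phi * enorm h)) by ring.
        have -> : 2 * enorm l ^+ 2 * (supD 3 phi * enorm h) = 2 * (enorm l ^+ 2 * (supD 3 phi * enorm h)) by ring.
        by rewrite ler_wpM2r ?mulr_ge0 ?sqr_ge0 // ler1n.
    apply: (le_trans near).
    set Y := supD 3 phi `^ delta * supD 2 phi `^ (1 - delta).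
    set X := supD 1 phi `^ delta * supD 0 phi `^ (1 - delta).
    have -> : (4 * X + 2 * Y) * t * enorm l ^+ 2 = (2 * enorm l ^+ 2) * (supD 2 phi `^ (1 - delta) * (supD 3 phi `^ delta * t)) + 4 * X * t * enorm l ^+ 2.
      by rewrite /Y; ring.
    by rewrite lerDl !mulr_ge0 ?sqr_ge0.
  rewrite min_r; last by rewrite expr2; nra.
  rewrite !subr0; apply: (le_trans far).
  set Y := supD 3 phi `^ delta * supD 2 phi `^ (1 - delta).
  set X := supD 1 phi `^ delta * supD 0 phi `^ (1 - delta).
  have -> : (4 * X + 2 * Y) * t * 1 = 4 * (supD 0 phi `^ (1 - delta) * (supD 1 phi `^ delta * t)) + 2 * Y * t.
    by rewrite /X; ring.
  by rewrite lerDl !mulr_ge0.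
rewrite [in X in _ <= X]/=.
have [n1|n1] := leP (enorm l) 1.
  have near : `|phi (x + h + l) - phi (x + h) - (phi (x + l) - phi x)|
     <= (2 * enorm l) * (supD 1 phi `^ (1 - delta) * (supD 2 phi `^ delta * t)).
    rewrite -powRM //.
    have k0 : 0 <= 2 * enorm l by rewrite mulr_ge0.
    apply: (@interpk _ _ _ _ _ A1 (mulr_ge0 A2 he) de k0).
    + apply: (le_trans (near1 _ _ _)); rewrite le_eqVlt; apply/orP; left; apply/eqP; ring.
    + apply: (le_trans (near2 _ _ _)).
      have -> : supD 2 phi * enorm l * enorm h = 1 * (enorm l * (supD 2 phi * enorm h)) by ring.
      have -> : 2 * enorm l * (supD 2 phi * enorm h) = 2 * (enorm l * (supD 2 phi * enorm h)) by ring.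
      by rewrite ler_wpM2r ?mulr_ge0 // ler1n.
  apply: (le_trans near).
  set Y := supD 2 phi `^ delta * supD 1 phi `^ (1 - delta).
  set X := supD 1 phi `^ delta * supD 0 phi `^ (1 - delta).
  have -> : (4 * X + 2 * Y) * t * enorm l = (2 * enorm l) * (supD 1 phi `^ (1 - delta) * (supD 2 phi `^ delta * t)) + 4 * X * t * enorm l.
    by rewrite /Y; ring.
  by rewrite lerDl !mulr_ge0.

apply: (le_trans far).
set Y := supD 2 phi `^ delta * supD 1 phi `^ (1 - delta).
set X := supD 1 phi `^ delta * supD 0 phi `^ (1 - delta).
have -> : (4 * X + 2 * Y) * t * 1 = 4 * (supD 0 phi `^ (1 - delta) * (supD 1 phi `^ delta * t)) + 2 * Y * t.
  by rewrite /X; ring.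
by rewrite lerDl !mulr_ge0.
Qed.

End Bounds.
End Aux.

Lemma le_int_nm d' (T : measurableType d') (R : realType) (mu : {measure set T -> \bar R})
  (f g : T -> \bar R) : (forall x, (0 <= f x)%E) -> (forall x, (f x <= g x)%E) ->
  (\int[mu]_x f x <= \int[mu]_x g x)%E.
Proof.
move=> f0 fg; have g0 x : (0 <= g x)%E by exact: le_trans (f0 x) (fg x).
rewrite !ge0_integralTE //.
apply: ereal_sup_le => _ [h hh <-]; exists h => //= x; exact: le_trans (hh x) (fg x).
Qed.

Lemma meas_m (R : realType) (d : nat) (alpha : R) :
  measurable_fun setT (fun l : d.-tuple R =>
    (if alpha == 1 then Num.min (enorm (trow l) ^+ 2) 1 else Num.min (enorm (trow l)) 1)).
Proof.
have me : measurable_fun setT (fun l : d.-tuple R => enorm (trow l)).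
  have -> : (fun l : d.-tuple R => enorm (trow l)) =
      (fun l => Num.sqrt (\sum_(i <- index_enum 'I_d) (tnth l i) ^+ 2)).
    apply/funext => l; rewrite /enorm; congr Num.sqrt.
    by apply: eq_bigr => i _; rewrite mxE.
  apply: measurableT_comp; first exact: continuous_measurable_fun (@sqrt_continuous R).
  apply: measurable_sum => i; apply: measurable_funX; exact: measurable_tnth.
case: (alpha == 1).
  apply: measurable_minr => //; exact: measurable_funX.
by apply: measurable_minr.
Qed.

Theorem lemma4p3 (R : realType) (d : nat) (alpha delta lo hi : R)
  (halpha : 0 < alpha <= 1) (hdelta : 0 < delta < alpha)
  (hlo : 0 < lo) (hhi : 0 < hi)
  (phi : 'rV[R]_d -> R) (hphi : Cb3 phi) (x x' : 'rV[R]_d) :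
  (ereal_sup [set (\int[F]_l `|deltaA alpha phi (trow l) x' - deltaA alpha phi (trow l) x|%:E)%E
             | F in [set F | exists mu, in_L alpha lo hi mu F]]
   <= Kalpha d alpha lo hi * (Calpha alpha delta phi * enorm (x' - x) `^ delta)%:E)%E.
Proof.
have hd : 0 < delta < 1.
  case/andP: hdelta => d0 da; case/andP: halpha => _ a1.
  by rewrite d0 /=; exact: lt_le_trans da a1.
set X := Calpha alpha delta phi * enorm (x' - x) `^ delta.
set m := fun l : d.-tuple R =>
  (if alpha == 1 then Num.min (enorm (trow l) ^+ 2) 1 else Num.min (enorm (trow l)) 1).
have m0 : forall l, 0 <= m l.
  by move=> l0; rewrite /m; case: (alpha == 1); rewrite le_min ?sqr_ge0 ?enorm_ge0 ?ler01.
have pw : forall l0, `|deltaA alpha phi (trow l0) x' - deltaA alpha phi (trow l0) x| <= X * m l0.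
  move=> l0; have := @pointwise _ _ phi hphi alpha delta x (x' - x) (trow l0) hd.
  by rewrite [x + _]addrC subrK.
apply: ge_ereal_sup => _ [F [mu hmu] <-].
have X0 : 0 <= X.
  by rewrite /X /Calpha; case: (alpha == 1); rewrite ?(mulr_ge0, addr_ge0, powR_ge0).
apply: (@le_trans _ _ (\int[F]_l (X%:E * (m l)%:E))%E).
  apply: le_int_nm => l; first exact: normr_ge0.
  by rewrite -EFinM lee_fin.
rewrite ge0_integralZl_EFin //; last first.
  - by apply/measurable_EFinP; exact: meas_m.
  - by move=> l _; rewrite lee_fin.
rewrite muleC; apply: lee_wpmul2r; first by rewrite lee_fin.
by apply: ereal_sup_ubound; exists F => //; exists mu.
Qed.
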